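(* Let $A,B\in\mathbb{C}^{n\times n}$ with $A$ diagonalizable and $\operatorname{rank}(B)=1$, and let $C=A+B$. If $C$ is diagonalizable, then $|\Lambda(C)|\leq 2|\Lambda(A)|$. If $C$ is not diagonalizable, then $|\Lambda(C)|\leq 2|\Lambda(A)|-1$.
   Context: For $M\in\mathbb{C}^{n\times n}$, $\Lambda(M)$ denotes the set of distinct eigenvalues of $M$ and $|\cdot|$ the cardinality of a set. *)

(* Defs.v *)
From HB Require Import structures.
From mathcomp Require Import all_boot all_order all_algebra.
From mathcomp Require Import finmap classical_sets cardinality.
From mathcomp Require Import complex.
From mathcomp Require Import reals.
Set Implicit Arguments. Unset Strict Implicit. Unset Printing Implicit Defensive.
Import GRing.Theory Num.Theory.
Local Open Scope ring_scope.

Definition spectrum (F : fieldType) (n : nat) (M : 'M[F]_n) : set F :=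
  [set a | eigenvalue M a].

(* |Λ(M)|: the number of distinct eigenvalues (the spectrum is finite). *)
Definition nb_eig (F : fieldType) (n : nat) (M : 'M[F]_n) : nat :=
  (#|` fset_set (spectrum M)|)%fset.

(* Main.v *)
Require Import Defs.
From HB Require Import structures.
From mathcomp Require Import all_boot all_order all_algebra.
From mathcomp Require Import finmap classical_sets cardinality.
From mathcomp Require Import complex.
From mathcomp Require Import reals.
From mathcomp Require Import zify.
Import GRing.Theory Num.Theory.
Local Open Scope ring_scope.

Section Helpers.
Variable F : fieldType.

Lemma rank_sum_eig n (M : 'M[F]_n) (s : seq F) : uniq s ->
  \rank (\sum_(r <- s) eigenspace M r)%MS = (\sum_(r <- s) \rank (eigenspace M r))%N.
Proof.
move=> us.
rewrite (big_nth 0) big_mkord [in RHS](big_nth 0) big_mkord.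
have dx : mxdirect (\sum_(i < size s) eigenspace M s`_i).
  apply: mxdirect_sum_eigenspace => i j _ _ sij; apply/val_inj.
  by apply/eqP; rewrite -(nth_uniq 0 _ _ us) ?ltn_ord // sij.
by rewrite (mxdirectP dx).
Qed.

Lemma sum_eig_le n (M : 'M[F]_n) (s : seq F) : uniq s ->
  (\sum_(r <- s) \rank (eigenspace M r) <= n)%N.
Proof. by move=> us; rewrite -rank_sum_eig // rank_leq_col. Qed.

Lemma sum_eig_diag n (M : 'M[F]_n) (s : seq F) : uniq s ->
  (\sum_(r <- s) \rank (eigenspace M r))%N = n -> diagonalizable M.
Proof.
move=> us hs; apply/diagonalizablePeigen; exists s => //.
apply/eqmxP; rewrite submx1 sub1mx /row_full rank_sum_eig // hs eqxx.
by [].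
Qed.

Lemma geo_rank1 n (A B : 'M[F]_n) a : \rank B = 1%N ->
  (\rank (eigenspace A a) <= (\rank (eigenspace (A + B) a)).+1)%N.
Proof.
move=> rB.
have sub : (eigenspace A a :&: kermx B <= eigenspace (A + B) a)%MS.
  apply/eigenspaceP; rewrite mulmxDr.
  have /eigenspaceP -> := capmxSl (eigenspace A a) (kermx B).
  have := capmxSr (eigenspace A a) (kermx B); rewrite sub_kermx => /eqP ->.
  by rewrite addr0.
have h1 := mxrank_sum_cap (eigenspace A a) (kermx B).
have h2 := rank_leq_col (eigenspace A a + kermx B)%MS.
have h3 := mxrank_leqif_sup sub.
have h4 := rank_leq_row B.
move: h3 => [h3 _].
rewrite mxrank_ker rB in h1.
lia.
Qed.

End Helpers.
Theorem corollary4p2 (R : realType) (n : nat) (A B : 'M[R[i]]_n) :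
  diagonalizable A -> \rank B = 1%N ->
  (diagonalizable (A + B) -> (nb_eig (A + B) <= 2 * nb_eig A)%N) /\
  (~ diagonalizable (A + B) -> (nb_eig (A + B) <= 2 * nb_eig A - 1)%N).
Proof.
move=> /diagonalizablePeigen [rs urs rsP] rB.
set C := A + B.
pose a x := \rank (eigenspace A x).
pose g x := \rank (eigenspace C x).
have hn : (\sum_(r <- rs) a r)%N = n by rewrite /a -rank_sum_eig // rsP mxrank1.
set rs' := [seq x <- rs | eigenvalue A x].
have urs' : uniq rs' by rewrite filter_uniq.
have hn' : (\sum_(r <- rs') a r)%N = n.
  rewrite -hn big_filter big_mkcond /=; apply: eq_bigr => x _.
  have [e0|nz] := eqVneq (eigenspace A x) 0.
    by rewrite /a e0 mxrank0; case: ifP.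
  by have -> : eigenvalue A x := nz.
set k := size rs'.
have nbA : (k <= nb_eig A)%N.
  have sub : (spectrum A `<=` [set` rs])%classic.
    move=> x /= hx; apply/negPn/negP => xrs.
    have := @sum_eig_le _ _ A (x :: rs); rewrite /= xrs urs big_cons => /(_ isT).
    rewrite -/(a x) hn.
    have : (0 < a x)%N by rewrite lt0n /a mxrank_eq0.
    lia.
  have fin : finite_set (spectrum A) := sub_finite_set sub (finite_seq rs).
  rewrite /nb_eig; apply: uniq_leq_size => // x.
  rewrite mem_filter => /andP [hx _].
  by rewrite in_fset_set // inE.
set sC : seq _ := fset_set (spectrum C).
have usC : uniq sC by apply: fset_uniq.
have hsC : forall x, x \in sC -> eigenvalue C x.
  move=> x; have [fin|nfin] := boolp.pselect (finite_set (spectrum C)).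
    by rewrite /sC in_fset_set // inE.
  rewrite /sC /fset_set; case: boolp.pselect => //.
have nbC : nb_eig C = size sC by [].
set W := sC ++ [seq x <- rs' | x \notin sC].
have uW : uniq W.
  rewrite cat_uniq usC filter_uniq // andbT.
  by apply/hasPn => x; rewrite mem_filter => /andP [].
have hW : (\sum_(x <- W) g x <= n)%N by apply: sum_eig_le.
have hWd : ~ diagonalizable C -> (\sum_(x <- W) g x != n)%N.
  by move=> nd; apply/negP => /eqP /(@sum_eig_diag _ _ C W uW).
rewrite /W big_cat big_filter in hW hWd.
have F1 : (\sum_(x <- sC) g x = \sum_(x <- sC | x \in rs') g x + \sum_(x <- sC | x \notin rs') g x)%N.
  by rewrite (bigID (fun x => x \in rs')).
have F2 : (\sum_(x <- rs') g x = \sum_(x <- rs' | x \in sC) g x + \sum_(x <- rs' | x \notin sC) g x)%N.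
  by rewrite (bigID (fun x => x \in sC)).
have F3 : (\sum_(x <- sC | x \in rs') g x = \sum_(x <- rs' | x \in sC) g x)%N.
  rewrite -[LHS]big_filter -[RHS]big_filter; apply: perm_big; apply: uniq_perm; rewrite ?filter_uniq //.
  by move=> x; rewrite !mem_filter andbC.
have F4 : (n <= \sum_(x <- rs') g x + k)%N.
  rewrite -hn' /k -sum1_size -big_split /=; apply: leq_sum => x _.
  by rewrite addn1 geo_rank1.
have F5 : size sC = (\sum_(x <- sC | x \in rs') 1 + \sum_(x <- sC | x \notin rs') 1)%N.
  by rewrite -sum1_size (bigID (fun x => x \in rs')).
have F6 : (\sum_(x <- sC | x \in rs') 1 <= k)%N.
  rewrite sum1_count -size_filter; apply: uniq_leq_size; rewrite ?filter_uniq //.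
  by move=> x; rewrite mem_filter => /andP [].
have F7 : (\sum_(x <- sC | x \notin rs') 1 <= \sum_(x <- sC | x \notin rs') g x)%N.
  rewrite big_seq_cond [X in (_ <= X)%N]big_seq_cond; apply: leq_sum => x /andP [xs _].
  by rewrite lt0n /g mxrank_eq0; apply: hsC.
have hW2 : (\sum_(x <- sC) g x + \sum_(x <- rs' | x \notin sC) g x <= n)%N := hW.
have hWd2 : ~ diagonalizable C -> (\sum_(x <- sC) g x + \sum_(x <- rs' | x \notin sC) g x != n)%N := hWd.
clear hW hWd.
rewrite nbC; split => hd.
  lia.
have := hWd2 hd; lia.
Qed.
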